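(* Let $L$ be a $\kappa$-frame. Every quotient $L/C$ ($C\in\mathbb{C}L$) of $L$ is d-reduced if and only if $L$ is Boolean (every element of $L$ has a complement).
   Context: $\kappa$ is a fixed regular cardinal; a $\kappa$-frame is a bounded distributive lattice having joins of all subsets of cardinality $<\kappa$ and satisfying the frame distributive law for such joins. A congruence is an equivalence relation that is a sub-$\kappa$-frame of $L\times L$; $\mathbb{C}L$ is the set of congruences and $L/C$ the quotient $\kappa$-frame. A $\kappa$-frame $M$ is d-reduced if $\mathfrak{D}_M=\{(a,b)\mid\forall x\in M:\ a\wedge x=0\iff b\wedge x=0\}$ is the diagonal. *)

(* Defs.v *)
From Stdlib Require Import ClassicalEpsilon.

(* Cardinals are represented by types: |A| <= |B| iff A injects into B. *)
Definition inj_into (A B : Type) : Prop :=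
  exists f : A -> B, forall x y, f x = f y -> x = y.

Definition card_lt (A K : Type) : Prop := inj_into A K /\ ~ inj_into K A.

(* K represents a regular cardinal kappa: kappa is infinite, and a union of
   fewer than kappa sets, each of cardinality < kappa, has cardinality < kappa. *)
Definition regular_cardinal (K : Type) : Prop :=
  inj_into nat K /\
  forall (I : Type) (A : I -> Type),
    card_lt I K -> (forall i, card_lt (A i) K) -> card_lt {i : I & A i} K.

Definition is_lub {L : Type} (le : L -> L -> Prop) {I : Type} (f : I -> L) (s : L) : Prop :=
  (forall i, le (f i) s) /\ (forall u, (forall i, le (f i) u) -> le s u).

(* A kappa-frame: a bounded lattice having joins of all families indexed by
   sets of cardinality < kappa, satisfying the frame distributive law
   a /\ (\/ f) = \/ (a /\ f i) for such joins. (Lattice distributivity is the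
   binary instance of this law.) *)
Record kframe (K : Type) := KFrame {
  kcar :> Type;
  kle : kcar -> kcar -> Prop;
  kbot : kcar;
  ktop : kcar;
  kmeet : kcar -> kcar -> kcar;
  kjoin : kcar -> kcar -> kcar;
  kle_refl : forall x, kle x x;
  kle_trans : forall x y z, kle x y -> kle y z -> kle x z;
  kle_antisym : forall x y, kle x y -> kle y x -> x = y;
  kbot_le : forall x, kle kbot x;
  kle_top : forall x, kle x ktop;
  kmeet_glb : forall a b c, kle c (kmeet a b) <-> (kle c a /\ kle c b);
  kjoin_lub : forall a b c, kle (kjoin a b) c <-> (kle a c /\ kle b c);
  ksup_ex : forall (I : Type) (f : I -> kcar), card_lt I K -> exists s, is_lub kle f s;
  kdistr : forall (I : Type) (f : I -> kcar) (s a : kcar), card_lt I K ->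
    is_lub kle f s -> is_lub kle (fun i => kmeet a (f i)) (kmeet a s)
}.

Arguments kle {K L} : rename.
Arguments kbot {K L} : rename.
Arguments ktop {K L} : rename.
Arguments kmeet {K L} : rename.
Arguments kjoin {K L} : rename.

(* Congruence: an equivalence relation on L that is a sub-kappa-frame of L x L
   (operations of L x L are componentwise; (0,0),(1,1) belong to C by
   reflexivity). *)
Definition congruence {K} (L : kframe K) (C : L -> L -> Prop) : Prop :=
  (forall a, C a a) /\
  (forall a b, C a b -> C b a) /\
  (forall a b c, C a b -> C b c -> C a c) /\
  (forall a b a' b', C a a' -> C b b' -> C (kmeet a b) (kmeet a' b')) /\
  (forall a b a' b', C a a' -> C b b' -> C (kjoin a b) (kjoin a' b')) /\
  (forall (I : Type) (f g : I -> L) (s t : L), card_lt I K ->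
     (forall i, C (f i) (g i)) -> is_lub kle f s -> is_lub kle g t -> C s t).

Definition dRel {M : Type} (meet : M -> M -> M) (bot : M) (a b : M) : Prop :=
  forall x, meet a x = bot <-> meet b x = bot.

Definition d_reduced {M : Type} (meet : M -> M -> M) (bot : M) : Prop :=
  forall a b, dRel meet bot a b <-> a = b.

Definition boolean {K} (L : kframe K) : Prop :=
  forall a : L, exists b : L, kmeet a b = kbot /\ kjoin a b = ktop.

Section Quotient.
Context {K : Type} (L : kframe K) (C : L -> L -> Prop).

Definition quot : Type := { P : L -> Prop | exists a, P = C a }.

Definition cls (a : L) : quot := exist _ (C a) (ex_intro _ a eq_refl).

Definition rep (p : quot) : L :=
  proj1_sig (constructive_indefinite_description _ (proj2_sig p)).

Definition qmeet (p q : quot) : quot := cls (kmeet (rep p) (rep q)).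
Definition qjoin (p q : quot) : quot := cls (kjoin (rep p) (rep q)).
Definition qbot : quot := cls kbot.
Definition qtop : quot := cls ktop.
End Quotient.

(* Main.v *)
Require Import Defs.
From Stdlib Require Import ClassicalEpsilon FunctionalExtensionality PropExtensionality ProofIrrelevance.

Section Lat.
Context {K : Type} (L : kframe K).

Lemma lr (x : L) : kle x x. Proof. apply kle_refl. Qed.
Lemma lt_ (x y z : L) : kle x y -> kle y z -> kle x z. Proof. apply kle_trans. Qed.
Lemma las (x y : L) : kle x y -> kle y x -> x = y. Proof. apply kle_antisym. Qed.
Lemma ml (x y z : L) : kle x z -> kle (kmeet x y) z.
Proof. intro H. eapply lt_; [|exact H]. exact (proj1 (proj1 (kmeet_glb _ L x y _) (lr _))). Qed.
Lemma mr (x y z : L) : kle y z -> kle (kmeet x y) z.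
Proof. intro H. eapply lt_; [|exact H]. exact (proj2 (proj1 (kmeet_glb _ L x y _) (lr _))). Qed.
Lemma mle (x y z : L) : kle z x -> kle z y -> kle z (kmeet x y).
Proof. intros; apply kmeet_glb; auto. Qed.
Lemma jl (x y z : L) : kle x y -> kle x (kjoin y z).
Proof. intro H. eapply lt_; [exact H|]. exact (proj1 (proj1 (kjoin_lub _ L y z _) (lr _))). Qed.
Lemma jr (x y z : L) : kle x z -> kle x (kjoin y z).
Proof. intro H. eapply lt_; [exact H|]. exact (proj2 (proj1 (kjoin_lub _ L y z _) (lr _))). Qed.
Lemma jle (x y z : L) : kle x z -> kle y z -> kle (kjoin x y) z.
Proof. intros; apply kjoin_lub; auto. Qed.
Lemma bl (x : L) : kle kbot x. Proof. apply kbot_le. Qed.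
Lemma lt1 (x : L) : kle x ktop. Proof. apply kle_top. Qed.

Hint Resolve lr ml mr mle jl jr jle bl lt1 : lat.

Lemma card_bool : regular_cardinal K -> card_lt bool K.
Proof.
  intros [[f Hf] _]. split.
  - exists (fun b : bool => if b then f 0 else f 1).
    intros [|] [|] E; auto; apply Hf in E; discriminate.
  - intros [g Hg].
    assert (Hi : forall n m, g (f n) = g (f m) -> n = m) by (intros; apply Hf, Hg; auto).
    destruct (g (f 0)) eqn:E0, (g (f 1)) eqn:E1;
      try (assert (0 = 1) by (apply Hi; congruence); discriminate);
      destruct (g (f 2)) eqn:E2;
      try (assert (0 = 2) by (apply Hi; congruence); discriminate);
      try (assert (1 = 2) by (apply Hi; congruence); discriminate).
Qed.

Lemma distr (HK : regular_cardinal K) (a b c : L) :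
  kle (kmeet a (kjoin b c)) (kjoin (kmeet a b) (kmeet a c)).
Proof.
  set (f := fun x : bool => if x then b else c).
  assert (Hl : is_lub kle f (kjoin b c)).
  { split.
    - intros [|]; simpl; auto with lat.
    - intros u Hu. apply jle; [apply (Hu true)|apply (Hu false)]. }
  destruct (kdistr _ L bool f _ a (card_bool HK) Hl) as [_ H2].
  apply H2. intros [|]; simpl; auto with lat.
Qed.

Lemma dd (HK : regular_cardinal K) (p q W : L) :
  kle (kmeet (kjoin p W) (kjoin q W)) (kjoin (kmeet p q) W).
Proof.
  eapply lt_; [apply distr; exact HK|].
  apply jle; [|auto with lat].
  apply lt_ with (y := kmeet q (kjoin p W)); [apply mle; auto with lat|].
  eapply lt_; [apply distr; exact HK|].
  apply jle; auto with lat.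
Qed.
End Lat.

Hint Resolve lr ml mr mle jl jr jle bl lt1 : lat.

Section Q.
Context {K : Type} (L : kframe K) (C : L -> L -> Prop) (HC : congruence L C).

Lemma qext (p q : quot L C) : proj1_sig p = proj1_sig q -> p = q.
Proof.
  destruct p as [P HP], q as [Q HQ]; simpl; intros ->. f_equal; apply proof_irrelevance.
Qed.

Lemma cls_eq (a b : L) : cls L C a = cls L C b <-> C a b.
Proof.
  destruct HC as (R & S & T & _).
  split.
  - intro E. apply (f_equal (@proj1_sig _ _)) in E. simpl in E.
    rewrite E. apply R.
  - intro H. apply qext; simpl. extensionality x. apply propositional_extensionality.
    split; eauto.
Qed.

Lemma cls_rep (p : quot L C) : p = cls L C (rep L C p).
Proof.
  apply qext. simpl. unfold rep.
  destruct (constructive_indefinite_description _ _) as [r Hr]; simpl. exact Hr.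
Qed.

Lemma qmeet_cls (a b : L) : qmeet L C (cls L C a) (cls L C b) = cls L C (kmeet a b).
Proof.
  unfold qmeet. apply cls_eq. destruct HC as (R & S & T & M & _).
  apply M; apply cls_eq; rewrite <- cls_rep; reflexivity.
Qed.
End Q.

Theorem mainTheorem16 (K : Type) (HK : regular_cardinal K) (L : kframe K) :
  (forall C : L -> L -> Prop, congruence L C -> d_reduced (qmeet L C) (qbot L C))
  <-> boolean L.
Proof.
  split.
  - intros H a.
    set (C := fun x y : L => exists z, kmeet a z = kbot /\ kle x (kjoin y z) /\ kle y (kjoin x z)).
    assert (HC : congruence L C).
    { unfold C; split; [|split; [|split; [|split; [|split]]]].
      - intro x. exists kbot. split; [apply las; auto with lat|split; auto with lat].
      - intros x y (z & Hz & H1 & H2). eauto.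
      - intros x y w (z1 & Hz1 & A1 & A2) (z2 & Hz2 & B1 & B2).
        exists (kjoin z1 z2). split.
        + apply las; auto with lat. eapply lt_; [apply distr; exact HK|].
          rewrite Hz1, Hz2; auto with lat.
        + split.
          * eapply lt_; [exact A1|]. apply jle; [eapply lt_; [exact B1|]|]; auto with lat.
          * eapply lt_; [exact B2|]. apply jle; [eapply lt_; [exact A2|]|]; auto with lat.
      - intros x y x' y' (z1 & Hz1 & A1 & A2) (z2 & Hz2 & B1 & B2).
        exists (kjoin z1 z2). split.
        + apply las; auto with lat. eapply lt_; [apply distr; exact HK|].
          rewrite Hz1, Hz2; auto with lat.
        + split.
          * eapply lt_; [|apply dd; exact HK].
            apply mle; [apply ml; eapply lt_; [exact A1|]|apply mr; eapply lt_; [exact B1|]];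
              auto with lat.
          * eapply lt_; [|apply dd; exact HK].
            apply mle; [apply ml; eapply lt_; [exact A2|]|apply mr; eapply lt_; [exact B2|]];
              auto with lat.
      - intros x y x' y' (z1 & Hz1 & A1 & A2) (z2 & Hz2 & B1 & B2).
        exists (kjoin z1 z2). split.
        + apply las; auto with lat. eapply lt_; [apply distr; exact HK|].
          rewrite Hz1, Hz2; auto with lat.
        + split.
          * apply jle; [eapply lt_; [exact A1|]|eapply lt_; [exact B1|]]; auto with lat.
          * apply jle; [eapply lt_; [exact A2|]|eapply lt_; [exact B2|]]; auto with lat.
      - intros I f g s t HI Hfg Hs Ht.
        set (zf := fun i => proj1_sig (constructive_indefinite_description _ (Hfg i))).
        assert (Hzf : forall i, kmeet a (zf i) = kbot /\ kle (f i) (kjoin (g i) (zf i))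
                                /\ kle (g i) (kjoin (f i) (zf i))).
        { intro i. unfold zf. destruct (constructive_indefinite_description _ _); simpl; auto. }
        destruct (ksup_ex _ L I zf HI) as [Z HZ].
        exists Z. split; [|split].
        + apply las; auto with lat. apply (proj2 (kdistr _ L I zf Z a HI HZ)).
          intro i. rewrite (proj1 (Hzf i)). auto with lat.
        + apply (proj2 Hs). intro i. eapply lt_; [apply (proj1 (proj2 (Hzf i)))|].
          apply jle; [apply jl, (proj1 Ht)|apply jr, (proj1 HZ)].
        + apply (proj2 Ht). intro i. eapply lt_; [apply (proj2 (proj2 (Hzf i)))|].
          apply jle; [apply jl, (proj1 Hs)|apply jr, (proj1 HZ)]. }
    assert (Cw0 : forall w, C w kbot <-> kmeet a w = kbot).
    { intro w; split.
      - intros (z & Hz & H1 & _). apply las; auto with lat. rewrite <- Hz.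
        apply mle; auto with lat. apply mr. eapply lt_; [exact H1|]. auto with lat.
      - intro Hw. exists w. split; [exact Hw|split; auto with lat]. }
    assert (E : cls L C a = cls L C ktop).
    { apply (proj1 (H C HC _ _)). intro x. rewrite (cls_rep L C x).
      unfold qbot. rewrite !qmeet_cls by exact HC. rewrite !cls_eq by exact HC.
      rewrite !Cw0.
      assert (E1 : kmeet a (kmeet a (rep L C x)) = kmeet a (rep L C x))
        by (apply las; auto with lat).
      assert (E2 : kmeet a (kmeet ktop (rep L C x)) = kmeet a (rep L C x))
        by (apply las; auto with lat).
      rewrite E1, E2. tauto. }
    apply cls_eq in E; [|exact HC].
    destruct E as (z & Hz & _ & H2). exists z. split; [exact Hz|].
    apply las; auto with lat.
  - intros HB C HC p q. split; [|intros ->; intro; tauto].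
    intro Hd.
    assert (key : forall a b, dRel (qmeet L C) (qbot L C) (cls L C a) (cls L C b) ->
                  C a (kmeet a b)).
    { intros a b Hab. destruct (HB b) as [b' [Hb1 Hb2]].
      assert (Hx := proj2 (Hab (cls L C b'))).
      rewrite !qmeet_cls in Hx by exact HC. unfold qbot in Hx.
      rewrite Hb1 in Hx. specialize (Hx eq_refl). apply cls_eq in Hx; [|exact HC].
      destruct HC as (R & S & T & M & J & _).
      assert (Ea : a = kjoin (kmeet a b) (kmeet a b')).
      { apply las; auto with lat.
        eapply lt_; [|apply distr; exact HK]. rewrite Hb2. auto with lat. }
      assert (Eb : kmeet a b = kjoin (kmeet a b) kbot) by (apply las; auto with lat).
      rewrite Ea at 1. rewrite Eb at 2. apply J; auto. }
    rewrite (cls_rep L C p), (cls_rep L C q) in *.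
    apply cls_eq; [exact HC|].
    destruct HC as (R & S & T & _).
    set (a := rep L C p) in *. set (b := rep L C q) in *.
    assert (Hba : dRel (qmeet L C) (qbot L C) (cls L C b) (cls L C a))
      by (intro x; specialize (Hd x); tauto).
    assert (E : kmeet a b = kmeet b a) by (apply las; auto with lat).
    apply T with (kmeet a b); [apply key; exact Hd|].
    apply S. rewrite E. apply key; exact Hba.
Qed.
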